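(* Let $m \ge 1$ and let $D_1, \ldots, D_m, D_{m+1} > 0$ be feature dispersions (defined in the context) of a data set with $m+1$ features, where feature $m+1$ is an added (noisy) feature. For $v \in \{1, \ldots, m+1\}$ let $\alpha_v = \dfrac{1}{\sum_{j=1}^{m+1} \frac{D_v}{D_j}}$ be the FIR factors computed over all $m+1$ features. Then, with $D_1,\ldots,D_m$ fixed, \[ \lim_{D_{m+1} \to \infty} \sum_{v=1}^{m+1} \alpha_v^2 D_v = \frac{1}{\sum_{j=1}^m \frac{1}{D_j}}, \] which is the value of $WCSS_w = \sum_{v=1}^m \alpha_v^2 D_v$ obtained on the original $m$ features (with the FIR factors computed over those $m$ features). That is, $WCSS_w$ is asymptotically unaffected by adding an arbitrarily noisy feature.
   Context: Let $X = \{x_1, \ldots, x_n\}$ be a data set whose points are described by features, $x_{iv}$ denoting the value of feature $v$ for $x_i$. Let $C = \{C_1, \ldots, C_k\}$ be a partition of $X$ into clusters with centroids $z_l$ (component-wise means). The dispersion of feature $v$ is $D_v = \sum_{l=1}^k \sum_{x_i \in C_l} (x_{iv} - z_{lv})^2$, assumed positive for every feature. For a set of features $\{1,\ldots,p\}$, the FIR factors are $\alpha_v = 1/\sum_{j=1}^p (D_v/D_j)$ and the weighted objective is $WCSS_w = \sum_{v=1}^p \alpha_v^2 D_v$. *)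

(* Defs.v *)
From HB Require Import structures.
From mathcomp Require Import all_boot all_order all_algebra.
From mathcomp Require Import all_classical all_reals all_analysis.
Set Implicit Arguments. Unset Strict Implicit. Unset Printing Implicit Defensive.
Import Order.TTheory GRing.Theory Num.Theory.
Import numFieldNormedType.Exports.
Local Open Scope ring_scope.

Definition fir_alpha (R : realType) (p : nat) (D : 'I_p -> R) (v : 'I_p) : R :=
  1 / \sum_(j < p) (D v / D j).

Definition WCSSw (R : realType) (p : nat) (D : 'I_p -> R) : R :=
  \sum_(v < p) (fir_alpha D v) ^+ 2 * D v.

Definition add_feature (R : realType) (m : nat) (D : 'I_m -> R) (x : R)
  : 'I_m.+1 -> R :=
  fun i => if unlift ord_max i is Some j then D j else x.

(* Main.v *)
Require Import Defs.
From HB Require Import structures.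
From mathcomp Require Import all_boot all_order all_algebra.
From mathcomp Require Import all_classical all_reals all_analysis.
From mathcomp Require Import ring lra.
Import Order.TTheory GRing.Theory Num.Theory.
Import numFieldNormedType.Exports.
Local Open Scope classical_set_scope.
Local Open Scope ring_scope.

Lemma WCSSw_closed (R : realType) (p : nat) (D : 'I_p -> R) :
  (0 < p)%N -> (forall j, 0 < D j) ->
  WCSSw D = 1 / \sum_(j < p) (1 / D j).
Proof.
move=> hp hD; set S := \sum_(j < p) (1 / D j).
have S0 : 0 < S.
  rewrite /S (bigD1 (Ordinal hp)) //=; apply: ltr_pwDl.
    by rewrite divr_gt0.
  by apply: sumr_ge0 => i _; rewrite divr_ge0 // ltW.
have S0' : S != 0 by rewrite gt_eqF.
rewrite /WCSSw.
transitivity (\sum_(v < p) (1 / D v) / S ^+ 2).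
  apply: eq_bigr => v _; rewrite /fir_alpha.
  have -> : \sum_(j < p) (D v / D j) = D v * S.
    by rewrite /S mulr_sumr; apply: eq_bigr => j _; rewrite mul1r.
  have Dv : D v != 0 by rewrite gt_eqF.
  by field; rewrite Dv S0'.
by rewrite -mulr_suml -/S; field.
Qed.

Theorem mainTheorem3 (R : realType) (m : nat) (D : 'I_m -> R) :
  (0 < m)%N -> (forall j, 0 < D j) ->
  (WCSSw (add_feature D x) @[x --> +oo] --> 1 / \sum_(j < m) (1 / D j))
  /\ WCSSw D = 1 / \sum_(j < m) (1 / D j).
Proof.
move=> hm hD; split; last exact: WCSSw_closed.
set S := \sum_(j < m) (1 / D j).
have S0 : 0 < S.
  rewrite /S (bigD1 (Ordinal hm)) //=; apply: ltr_pwDl.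
    by rewrite divr_gt0.
  by apply: sumr_ge0 => i _; rewrite divr_ge0 // ltW.
apply: (@cvg_trans _ ((fun x : R => 1 / (S + x^-1)) x @[x --> +oo])).
  apply: near_eq_cvg; near=> x.
  have x0 : 0 < x by near: x; exact: nbhs_pinfty_gt.
  have hA : forall j, 0 < add_feature D x j.
    move=> j; rewrite /add_feature; case: unliftP => [k _|_] //.
  rewrite (@WCSSw_closed _ _ _ (ltn0Sn m) hA) big_ord_recr /=.
  congr (1 / (_ + _)).
    apply: eq_bigr => i _; have -> : widen_ord (leqnSn m) i = lift ord_max i by apply: val_inj; rewrite /= /bump leqNgt ltn_ord.
    by rewrite /add_feature liftK.
  by rewrite /add_feature unlift_none div1r.
have -> : 1 / S = 1 / (S + 0) by rewrite addr0.
apply: (@cvgM _ _ _ _ (fun=> 1) (fun x : R => (S + x^-1)^-1)); first exact: cvg_cst.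
apply: (@cvgV _ _ _ _ (fun x : R => (S + x^-1))); first by rewrite addr0 gt_eqF.
apply: (@cvgD _ _ _ _ _ (fun=> S) (fun x : R => x^-1)); first exact: cvg_cst.
have H := @gtr0_cvgV0 R R (pinfty_nbhs R) _ id.
apply/H; last exact: cvg_id.
exact: nbhs_pinfty_gt.
Unshelve. all: by end_near.
Qed.
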